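(* Let $F$ be a graph of diameter $2$, $n=|V(F)|$, $t=\delta(F)$, and let $l>n$ be an integer. If $C_{l-2}^{n-2}>n!\,C_{l-2}^{n-t-2}$, then $0<\delta_l<z_{i+1}-z_i$ for every $i\in\{t+1,t+2,\dots,l-1\}$.
   Context: All graphs are simple, finite, undirected. The $F$-degree of a vertex $v$ in $G$ is the number of subgraphs of $G$ (not necessarily induced) isomorphic to $F$ and containing $v$. $A_{2l-1}$ is the graph with vertex set $\{1,\dots,2l-1\}$ in which distinct $i,j$ are adjacent iff $|i-j|\le l-1$; $F_{2l}$ is obtained from $A_{2l-1}$ by adding a new vertex $2l$ joined exactly to $1,\dots,t$. $z_i$ is the $F$-degree of $i$ in $A_{2l-1}$, $f_i$ the $F$-degree of $i$ in $F_{2l}$, and $\delta_i=f_i-z_i$. $C_m^k=\frac{m!}{k!(m-k)!}$ for integers $m\ge k\ge 0$, and $C_m^k=0$ otherwise. *)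

(* Defs.v *)
From mathcomp Require Import all_boot all_order all_algebra.
Set Implicit Arguments. Unset Strict Implicit. Unset Printing Implicit Defensive.
Import GRing.Theory Num.Theory.

(* A simple graph is a symmetric irreflexive relation [e] on a finite type. *)

(* [is_copy e eF W Es]: the subgraph (W, Es) of the graph (T, e) -- W a vertex
   set, Es a set of edges of e (as 2-element vertex sets) with ends in W --
   is isomorphic to the graph F = ('I_n, eF). *)
Definition is_copy (T : finType) (e : rel T) (n : nat) (eF : rel 'I_n)
    (W : {set T}) (Es : {set {set T}}) : bool :=
  [forall E in Es, exists x, exists y,
      [&& x \in W, y \in W, e x y & E == [set x; y]]] &&
  [exists f : {ffun 'I_n -> T},
      [&& injectiveb f, f @: setT == W &
          [forall x, forall y, eF x y == ([set f x; f y] \in Es)]]].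

Definition Fdeg (T : finType) (e : rel T) (n : nat) (eF : rel 'I_n) (v : T) : nat :=
  #|[set p : {set T} * {set {set T}} | is_copy e eF p.1 p.2 && (v \in p.1)]|.

(* Vertex k (0-based) of the ordinal types below represents vertex k+1 of the paper. *)

Definition Arel (l : nat) : rel 'I_(l.*2.-1) :=
  fun i j => [&& i != j, (i <= j + (l - 1))%N & (j <= i + (l - 1))%N].

(* F_{2l}: A_{2l-1} plus vertex 2l joined exactly to 1..t. *)
Definition Frel (l t : nat) : rel 'I_(l.*2) :=
  fun i j => (i != j) &&
    (if ((i < l.*2.-1) && (j < l.*2.-1))%N
     then ((i <= j + (l - 1)) && (j <= i + (l - 1)))%N
     else if (i == l.*2.-1 :> nat) then (j < t)%N else (i < t)%N).

(* z_i = F-degree of vertex i (1-based) in A_{2l-1} (the sum has exactly one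
   term when 1 <= i <= 2l-1). *)
Definition zdeg (n : nat) (eF : rel 'I_n) (l i : nat) : nat :=
  \sum_(v : 'I_(l.*2.-1) | val v == i.-1) Fdeg (@Arel l) eF v.

Definition fdeg (n : nat) (eF : rel 'I_n) (l t i : nat) : nat :=
  \sum_(v : 'I_(l.*2) | val v == i.-1) Fdeg (@Frel l t) eF v.

Definition ddeg (n : nat) (eF : rel 'I_n) (l t i : nat) : int :=
  (fdeg eF l t i)%:Z - (zdeg eF l i)%:Z.

Definition Cb (m k : int) : nat :=
  if ((0 <= k) && (k <= m))%R then 'C(`|m|%N, `|k|%N) else 0%N.

Definition degree (n : nat) (eF : rel 'I_n) (x : 'I_n) : nat := #|[set y | eF x y]|.

Definition is_min_degree (n : nat) (eF : rel 'I_n) (t : nat) : Prop :=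
  (exists x, degree eF x = t) /\ (forall x, (t <= degree eF x)%N).

Definition diameter2 (n : nat) (eF : rel 'I_n) : Prop :=
  (exists x y, x != y /\ ~~ eF x y) /\
  (forall x y, x != y -> ~~ eF x y -> exists w, eF x w && eF w y).

(* Main.v *)
Require Import Defs.
From mathcomp Require Import all_boot all_order all_algebra.
From mathcomp Require Import zify.
Import GRing.Theory Num.Theory.
Set Implicit Arguments. Unset Strict Implicit. Unset Printing Implicit Defensive.

Lemma card_bigcup_le (I T : finType) (P : pred I) (F : I -> {set T}) :
  (#|\bigcup_(i | P i) F i| <= \sum_(i | P i) #|F i|)%N.
Proof.
elim/big_rec2: _ => [|i A k _ IH]; first by rewrite cards0.
rewrite cardsU; apply: leq_trans (leq_subr _ _) _; by rewrite leq_add2l.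
Qed.

Lemma card_prefix m k : (k <= m)%N -> #|[set z : 'I_m | (z < k)%N]| = k.
Proof.
move=> hk.
have -> : [set z : 'I_m | (z < k)%N] = [set widen_ord hk x | x in 'I_k].
  apply/setP=> z; rewrite inE; apply/idP/imsetP.
    by move=> hz; exists (Ordinal hz) => //; apply: val_inj.
  by case=> x _ ->; rewrite /= ltn_ord.
rewrite card_imset ?card_ord //; move=> x y /(congr1 val) /= h; exact: val_inj.
Qed.

Lemma set2_eq (T : finType) (a b c d : T) : [set a; b] = [set c; d] ->
  (a = c /\ b = d) \/ (a = d /\ b = c).
Proof.
move/setP=> H.
have ha : a \in [set c; d] by rewrite -H set21.
have hb : b \in [set c; d] by rewrite -H set22.
have hc : c \in [set a; b] by rewrite H set21.
have hd : d \in [set a; b] by rewrite H set22.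
move: ha hb hc hd; rewrite !in_set2.
case/orP=> /eqP h1; case/orP=> /eqP h2; subst; auto;
case/orP=> /eqP h3; case/orP=> /eqP h4; subst; auto.
Qed.

Section Gen.
Variables (n : nat) (eF : rel 'I_n).

Definition Ef (T : finType) (f : {ffun 'I_n -> T}) : {set {set T}} :=
  [set [set f p.1; f p.2] | p in [set p : 'I_n * 'I_n | eF p.1 p.2]].
Definition Qc (T : finType) (f : {ffun 'I_n -> T}) : {set T} * {set {set T}} :=
  (f @: setT, Ef f).
Definition emb (T : finType) (e : rel T) (f : {ffun 'I_n -> T}) :=
  injectiveb f && [forall x, forall y, eF x y ==> e (f x) (f y)].

Lemma embP (T : finType) (e : rel T) (f : {ffun 'I_n -> T}) :
  reflect (injective f /\ forall x y, eF x y -> e (f x) (f y)) (emb e f).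
Proof.
apply: (iffP andP) => [[/injectiveP hi /forallP h]|[hi h]]; split => //.
- by move=> x y hxy; have /forallP/(_ y)/implyP := h x; apply.
- exact/injectiveP.
- by apply/forallP=> x; apply/forallP=> y; apply/implyP; apply: h.
Qed.

Hypothesis sF : symmetric eF.

Lemma copyP (T : finType) (e : rel T) (se : symmetric e) W Es :
  is_copy e eF W Es <-> exists2 f, emb e f & (W, Es) = Qc f.
Proof.
split.
- case/andP=> /forall_inP H1 /existsP [f /and3P [/injectiveP hi /eqP hW /forallP H2]].
  have H2' x y : eF x y = ([set f x; f y] \in Es) by apply/eqP; have /forallP := H2 x; apply.
  exists f.
    apply/embP; split=> // x y hxy.
    have := H1 [set f x; f y]; rewrite -H2' hxy => /(_ isT) /existsP [x' /existsP [y' /and4P [_ _ he /eqP hE]]].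
    by case: (set2_eq hE) => [[-> ->]|[-> ->]] //; rewrite se.
  rewrite /Qc hW; congr pair; apply/setP=> E; apply/idP/imsetP.
    move=> hE; have := H1 E hE => /existsP [x' /existsP [y' /and4P [hx hy _ /eqP hEq]]].
    move: hx hy hEq; rewrite -hW => /imsetP [x _ ->] /imsetP [y _ ->] hEq.
    by exists (x, y) => //; rewrite inE /= H2' -hEq.
  by case=> -[x y]; rewrite inE /= H2' => h ->.
- case=> f /embP [hi he] [-> ->]; apply/andP; split.
    apply/forall_inP=> E /imsetP [[x y]]; rewrite inE /= => hxy ->.
    apply/existsP; exists (f x); apply/existsP; exists (f y).
    by rewrite !imset_f ?inE ?he ?eqxx.
  apply/existsP; exists f; apply/and3P; split=> //; first exact/injectiveP.
  apply/forallP=> x; apply/forallP=> y; apply/eqP; apply/idP/idP.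
    by move=> hxy; apply/imsetP; exists (x, y); rewrite ?inE.
  case/imsetP=> -[x' y']; rewrite inE /= => hxy' /set2_eq.
  by case=> [[/hi -> /hi ->]|[/hi -> /hi ->]] //; rewrite sF.
Qed.

Lemma FdegE (T : finType) (e : rel T) (se : symmetric e) v :
  Fdeg e eF v = #|[set Qc f | f in [set f | emb e f & v \in f @: setT]]|.
Proof.
rewrite /Fdeg; apply: eq_card => -[W Es]; rewrite inE /=.
apply/idP/imsetP.
  case/andP=> /(copyP se) [f hf hq] hv; exists f => //.
  by rewrite inE hf; case: hq hv => -> _.
case=> f; rewrite inE => /andP [hf hv] hq; apply/andP; split.
  by apply/(copyP se); exists f.
by case: hq => ->.
Qed.

Definition Hm (T T' : finType) (h : T -> T') (p : {set T} * {set {set T}}) :=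
  (h @: p.1, (fun E : {set T} => h @: E) @: p.2).

Lemma QcH (T T' : finType) (h : T -> T') (f : {ffun 'I_n -> T}) :
  Qc [ffun x => h (f x)] = Hm h (Qc f).
Proof.
rewrite /Qc /Hm /=; congr pair.
  by rewrite -imset_comp; apply: eq_imset=> x; rewrite ffunE.
rewrite /Ef -imset_comp; apply: eq_imset=> p /=.
by rewrite imsetU1 imset_set1 !ffunE.
Qed.

Lemma Hm_inj (T T' : finType) (h : T -> T') : injective h -> injective (Hm h).
Proof.
move=> hi [W1 E1] [W2 E2] [/imset_inj h1 /imset_inj h2].
by rewrite (h1 hi) (h2 (imset_inj hi)).
Qed.

End Gen.

Lemma test (x y l : nat) : x < l -> y < l -> x != y -> [&& x != y, x <= y + (l-1) & y <= x + (l-1)].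
Proof. move=> *. lia. Qed.

Lemma test2 (x y l : nat) : [&& x != y, x <= y + (l-1) & y <= x + (l-1)] -> x + 1 <= y + l.
Proof. move=> *. lia. Qed.

Definition rk (m : nat) (S : {set 'I_m}) (y : 'I_m) := #|[set z in S | (z < y)%N]|.

Lemma rk_lt m (S : {set 'I_m}) y : y \in S -> rk S y < #|S|.
Proof.
move=> hy; apply: proper_card; apply/properP; split.
  by apply/subsetP=> z; rewrite inE => /andP [].
by exists y => //; rewrite inE ltnn andbF.
Qed.

Lemma rk_mono m (S : {set 'I_m}) (y1 y2 : 'I_m) : y1 \in S -> y1 < y2 -> rk S y1 < rk S y2.
Proof.
move=> h1 h12; apply: proper_card; apply/properP; split.
  apply/subsetP=> z; rewrite !inE => /andP [-> h]; exact: ltn_trans h h12.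
by exists y1; rewrite !inE ?h1 ?h12 ?ltnn ?andbF.
Qed.

Lemma rk_inj m (S : {set 'I_m}) y1 y2 : y1 \in S -> y2 \in S -> rk S y1 = rk S y2 -> y1 = y2.
Proof.
move=> h1 h2 he; case: (ltngtP y1 y2) => h.
- by have := rk_mono h1 h; rewrite he ltnn.
- by have := rk_mono h2 h; rewrite he ltnn.
- exact: val_inj.
Qed.

Lemma Arel_sym l : symmetric (@Arel l).
Proof. move=> x y; rewrite /Arel eq_sym; apply/idP/idP=> /and3P [h1 h2 h3]; by rewrite h1 h2 h3. Qed.

Lemma cardsU_disj (T : finType) (A B : {set T}) : [disjoint A & B] -> #|A :|: B| = #|A| + #|B|.
Proof. by move=> h; apply/eqP; rewrite (leq_card_setU A B).2. Qed.

Lemma disjP (U : finType) (A B : {set U}) :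
  (forall x, x \in A -> x \in B -> False) -> [disjoint A & B].
Proof.
move=> h; rewrite -setI_eq0; apply/eqP/setP=> x; rewrite !inE.
by apply/negbTE/negP => /andP [h1 h2]; exact: h h1 h2.
Qed.

Section Part1.
Variables (n : nat) (eF : rel 'I_n) (l : nat).
Hypotheses (sF : symmetric eF) (iF : irreflexive eF).
Variables (u0 v0 : 'I_n).
Hypothesis huv : eF u0 v0.
Local Notation T := 'I_(l.*2.-1).
Variables (a b b' : T) (i : nat).
Hypotheses (ha : (a : nat) = i.-1) (hb : (b : nat) = i) (hb' : (b' : nat) = i + l - 1)
  (hi : (1 <= i <= l - 1)%N).

Definition C1 := [set z : T | (b < z < b')%N].
Definition S0 := ~: [set u0; v0].
Definition fU (U : {set T}) : {ffun 'I_n -> T} :=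
  [ffun y => if y == u0 then b else if y == v0 then b' else nth b (enum U) (rk S0 y)].
Definition Dr := [set U : {set T} | (U \subset C1) && (#|U| == n - 2)].

Lemma uv_neq : u0 != v0.
Proof. by apply/eqP=> h; move: huv; rewrite h iF. Qed.

Lemma cardS0 : #|S0| = n - 2.
Proof.
have := cardsC [set u0; v0]; rewrite cards2 uv_neq card_ord /S0 => h; rewrite -[in RHS]h; lia.
Qed.

Lemma fU_val U y : U \in Dr ->
  (b <= fU U y <= b')%N /\ (y != u0 -> y != v0 -> fU U y \in U).
Proof.
rewrite inE => /andP [hC /eqP hU]; rewrite ffunE.
case: eqP => [_|/eqP h0]; first by rewrite leqnn hb hb'; split=> //; lia.
case: eqP => [_|/eqP h1]; first by rewrite leqnn hb hb'; split=> //; lia.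
have hin : nth b (enum U) (rk S0 y) \in U.
  rewrite -mem_enum; apply: mem_nth; rewrite -cardE hU -cardS0; apply: rk_lt.
  by rewrite !inE negb_or h0 h1.
have := subsetP hC _ hin; rewrite inE => /andP [h2 h3]; split=> //.
by rewrite (ltnW h2) (ltnW h3).
Qed.

Lemma fU_inj U : U \in Dr -> injective (fU U).
Proof.
move=> hD.
have hC : U \subset C1 by move: hD; rewrite inE => /andP [].
have nb : b \notin U by apply/negP=> /(subsetP hC); rewrite inE ltnn.
have nb' : b' \notin U by apply/negP=> /(subsetP hC); rewrite inE ltnn andbF.
have hbb : b != b' by apply/eqP=> e; move: hb'; rewrite -e hb; lia.
have key y : y != u0 -> y != v0 -> fU U y = nth b (enum U) (rk S0 y).
  by move=> h0 h1; rewrite ffunE (negbTE h0) (negbTE h1).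
have hvu : (v0 == u0) = false by rewrite eq_sym (negbTE uv_neq).
have huv' : (u0 == v0) = false by rewrite (negbTE uv_neq).
move=> x y hxy.
have [hx _] := fU_val x hD; have [hy _] := fU_val y hD.
have [_ inx] := fU_val x hD; have [_ iny] := fU_val y hD.
case: (x =P u0) => [ex|/eqP nx0].
  case: (y =P u0) => [ey|/eqP ny0]; first by rewrite ex ey.
  case: (y =P v0) => [ey|/eqP ny1].
    by move: hxy; rewrite ex ey !ffunE !eqxx hvu => hh; move: hbb; rewrite hh eqxx.
  by move: (iny ny0 ny1); rewrite -hxy ex ffunE eqxx (negbTE nb).
case: (x =P v0) => [ex|/eqP nx1].
  case: (y =P u0) => [ey|/eqP ny0].
    by move: hxy; rewrite ex ey !ffunE !eqxx hvu => hh; move: hbb; rewrite hh eqxx.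
  case: (y =P v0) => [ey|/eqP ny1]; first by rewrite ex ey.
  by move: (iny ny0 ny1); rewrite -hxy ex ffunE eqxx hvu (negbTE nb').
have ix := inx nx0 nx1.
case: (y =P u0) => [ey|/eqP ny0].
  by move: ix; rewrite hxy ey ffunE eqxx (negbTE nb).
case: (y =P v0) => [ey|/eqP ny1].
  by move: ix; rewrite hxy ey ffunE eqxx hvu (negbTE nb').
move: hxy; rewrite (key _ nx0 nx1) (key _ ny0 ny1) => /eqP.
have hU : #|U| = n - 2 by move: hD; rewrite inE => /andP [_ /eqP].
rewrite nth_uniq ?enum_uniq // -?cardE ?hU -?cardS0; try (apply: rk_lt; rewrite !inE negb_or ?nx0 ?nx1 ?ny0 ?ny1 //).
by move/eqP; apply: rk_inj; rewrite !inE negb_or ?nx0 ?nx1 ?ny0 ?ny1.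
Qed.


Lemma fU_emb U : U \in Dr -> emb eF (@Arel l) (fU U).
Proof.
move=> hD; apply/embP; split; first exact: fU_inj.
move=> x y hxy.
have hne : fU U x != fU U y.
  by apply/negP=> /eqP /(fU_inj hD) exy; move: hxy; rewrite exy iF.
have [hx _] := fU_val x hD; have [hy _] := fU_val y hD.
move: hne hx hy; rewrite /Arel hb hb' => hne hx hy.
have : val (fU U x) != val (fU U y) by [].
have := ltn_ord (fU U x); have := ltn_ord (fU U y).
rewrite hne /=; lia.
Qed.

Lemma n_ge2 : (2 <= n)%N.
Proof. have := uv_neq; have := ltn_ord u0; have := ltn_ord v0. move=> h1 h2 h3.
have : (u0 : nat) != v0 by []. lia. Qed.

Lemma fU_img U : U \in Dr -> fU U @: setT = b |: (b' |: U).
Proof.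
move=> hD; apply/eqP; rewrite eqEcard; apply/andP; split.
  apply/subsetP=> z /imsetP [y _ ->].
  have [_ hy] := fU_val y hD.
  case: (y =P u0) => [->|/eqP n0]; first by rewrite ffunE eqxx setU11.
  case: (y =P v0) => [->|/eqP n1].
    by rewrite ffunE eq_sym (negbTE uv_neq) eqxx !inE eqxx orbT.
  by rewrite !inE (hy n0 n1) !orbT.
rewrite card_imset; last exact: fU_inj.
have hU : #|U| = n - 2 by move: hD; rewrite inE => /andP [_ /eqP].
rewrite cardsT card_ord !cardsU1 hU; have := n_ge2.
case: (b \in _); case: (b' \in _) => /=; lia.
Qed.

Lemma cardC1 : #|C1| = l - 2.
Proof.
have -> : C1 = [set z : T | (z < b')%N] :\: [set z : T | (z < b.+1)%N].
  by apply/setP=> z; rewrite !inE -leqNgt andbC.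
rewrite cardsDS; last first.
  apply/subsetP=> z; rewrite !inE => h; apply: leq_trans h _; rewrite hb hb'; lia.
rewrite (card_prefix (ltnW (ltn_ord b'))) (card_prefix (ltn_ord b)) hb hb'; lia.
Qed.

Definition sw (x : T) := if x == a then b else if x == b then a else x.

Lemma swK : involutive sw.
Proof.
move=> x; rewrite /sw; case: (x =P a) => [->|/eqP na].
  by rewrite eqxx; case: (b =P a) => // ->.
case: (x =P b) => [->|/eqP nb]; first by rewrite eqxx.
by rewrite (negbTE na) (negbTE nb).
Qed.

Lemma sw_inj : injective sw. Proof. exact: can_inj swK. Qed.


Lemma part1 :
  (Fdeg (@Arel l) eF a + 'C(l - 2, n - 2) <= Fdeg (@Arel l) eF b)%N.
Proof.
have se := @Arel_sym l.
rewrite !(FdegE sF se).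
pose Sv (v : T) := [set Qc eF f | f in [set f : {ffun 'I_n -> T} | emb eF (@Arel l) f & v \in f @: setT]].
change (#|Sv a| + 'C(l - 2, n - 2) <= #|Sv b|)%N.
have memS v p : reflect (exists f, [/\ emb eF (@Arel l) f, v \in f @: setT & p = Qc eF f]) (p \in Sv v).
  apply: (iffP imsetP).
    by case=> f; rewrite inE => /andP [h1 h2] ->; exists f.
  by case=> f [h1 h2 ->]; exists f; rewrite // inE h1 h2.
have vab : (a < b < b')%N by rewrite ha hb hb'; lia.
have hab : a != b by apply/eqP=> e; move: vab; rewrite e ltnn.
have hab' : b' != a by apply/eqP=> e; move: vab; rewrite e; lia.
have hbb' : b' != b by apply/eqP=> e; move: vab; rewrite e; lia.
have swa : sw a = b by rewrite /sw eqxx.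
have swb' : sw b' = b' by rewrite /sw (negbTE hab') (negbTE hbb').
pose P2 := Hm sw @: (Sv a :\: Sv b).
pose X := [set Qc eF (fU U) | U in Dr].
have P2form p : p \in P2 -> exists f, [/\ emb eF (@Arel l) f, a \in f @: setT,
     b \notin f @: setT & p = Qc eF [ffun x => sw (f x)]].
  case/imsetP=> q; rewrite inE => /andP [nq /memS [f [hf hfa eq]]] ->; subst q.
  exists f; split=> //; last by rewrite QcH.
  by apply/negP=> hfb; move/negP: nq; apply; apply/memS; exists f.
have cX : #|X| = 'C(l - 2, n - 2).
  rewrite card_in_imset; first by rewrite cards_draws cardC1.
  move=> U1 U2 h1 h2 /(congr1 fst) /=; rewrite !fU_img //.
  have nb U : U \in Dr -> b \notin b' |: U.
    rewrite inE => /andP [hC _]; rewrite !inE negb_or eq_sym hbb' /=.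
    by apply/negP=> /(subsetP hC); rewrite inE ltnn.
  have nb' U : U \in Dr -> b' \notin U.
    rewrite inE => /andP [hC _].
    by apply/negP=> /(subsetP hC); rewrite inE ltnn andbF.
  move=> e; rewrite -(setU1K (nb' _ h1)) -(setU1K (nb _ h1)) e.
  by rewrite (setU1K (nb _ h2)) (setU1K (nb' _ h2)).
have cP2 : #|P2| = #|Sv a :\: Sv b| by rewrite card_imset //; apply: Hm_inj sw_inj.
have aX p : p \in X -> a \notin p.1.
  case/imsetP=> U hU -> /=; rewrite fU_img // !inE (negbTE hab) eq_sym (negbTE hab') /=.
  move: hU; rewrite inE => /andP [hC _].
  apply/negP=> /(subsetP hC); rewrite inE => /andP [h _]; move: h vab; lia.
have aP2 p : p \in P2 -> a \notin p.1.
  case/P2form=> f [_ _ nb ->] /=; apply/negP=> /imsetP [x _]; rewrite ffunE => e.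
  by move: nb; rewrite -swa e swK imset_f.
have aS p : p \in Sv a -> a \in p.1 by case/memS=> f [_ h ->].
have sub : (Sv a :&: Sv b) :|: P2 :|: X \subset Sv b.
  apply/subsetP=> p; rewrite !inE -orbA => /or3P [/andP [_ //]| hp | hp].
  - case/P2form: hp => f [/embP [fi fe] fa fb ->]; apply/memS.
    exists [ffun x => sw (f x)]; split => //; last first.
      by case/imsetP: fa => x _ ex; rewrite -swa ex; apply/imsetP; exists x; rewrite ?ffunE.
    apply/embP; split.
      by move=> x y; rewrite !ffunE => /sw_inj /fi.
    move=> x y hxy; rewrite !ffunE.
    have nbx : f x != b by apply/negP=> /eqP e; move: fb; rewrite -e imset_f.
    have nby : f y != b by apply/negP=> /eqP e; move: fb; rewrite -e imset_f.
    have := fe _ _ hxy; rewrite /sw (negbTE nbx) (negbTE nby).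
    have hb1 := ltn_ord (f x); have hb2 := ltn_ord (f y).
    case: (f x =P a) => [ex|/eqP nax]; case: (f y =P a) => [ey|/eqP nay].
    + by rewrite ex ey /Arel eqxx.
    + rewrite ex /Arel; move: nay nby; rewrite -!val_eqE /= ha hb.
      move=> h1 h2 /and3P [h3 h4 h5]; move: h1 h2 h3 h4 h5 hi; lia.
    + rewrite ey /Arel; move: nax nbx; rewrite -!val_eqE /= ha hb.
      move=> h1 h2 /and3P [h3 h4 h5]; move: h1 h2 h3 h4 h5 hi; lia.
    + by [].
  - case/imsetP: hp => U hU ->; apply/memS; exists (fU U); split=> //.
      exact: fU_emb.
    by rewrite fU_img // setU11.
have d1 : [disjoint Sv a :&: Sv b & P2].
  by apply: disjP => p; rewrite inE => /andP [/aS h _] /aP2; rewrite h.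
have d2 : [disjoint (Sv a :&: Sv b) :|: P2 & X].
  apply: disjP => p; rewrite inE => /orP [h1|hp2] hX.
    by move: h1; rewrite inE => /andP [/aS h _]; move: (aX _ hX); rewrite h.
  case/P2form: hp2 => f [/embP [fi fe] _ fb ep].
  case/imsetP: hX => U hU eU.
  have hin : [set b; b'] \in p.2.
    rewrite eU /= /Ef; apply/imsetP; exists (u0, v0); rewrite ?inE //=.
    by rewrite !ffunE !eqxx eq_sym (negbTE uv_neq).
  move: hin; rewrite ep /= /Ef => /imsetP [[x y]]; rewrite inE /= => hxy.
  rewrite !ffunE => /set2_eq he.
  have := fe _ _ hxy.
  have {}he : (f x = a /\ f y = b') \/ (f x = b' /\ f y = a).
    have swb : sw b = a by rewrite /sw eq_sym (negbTE hab) eqxx.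
    case: he => [[e1 e2]|[e1 e2]]; [left|right]; split;
      by rewrite -[LHS]swK -?e1 -?e2 ?swb ?swb'.
  have hna : ~~ (@Arel l a b') by rewrite /Arel; apply/negP=> /and3P [_ _ h]; move: h hi; rewrite ha hb'; lia.
  by case: he => [[-> ->]|[-> ->]]; [|rewrite se]; move/negP: hna.
have := subset_leq_card sub.
rewrite cardsU_disj // cardsU_disj // cP2 cX -(cardsID (Sv b) (Sv a)); exact.
Qed.

End Part1.

Section Part2.
Variables (n : nat) (eF : rel 'I_n) (l t : nat).
Hypotheses (sF : symmetric eF) (iF : irreflexive eF).
Local Notation T := 'I_(l.*2.-1).
Local Notation T' := 'I_(l.*2).
Local Notation Fr := (@Frel l t).
Hypothesis hl : (0 < l)%N.
Variables (v : T) (v' w : T').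
Hypotheses (hv : (v : nat) = l - 1) (hv' : (v' : nat) = l - 1) (hw : (w : nat) = l.*2.-1).

Definition io (x : T) : T' := widen_ord (leq_pred _) x.
Definition ro (y : T') : T := insubd v (val y).

Lemma Frel_sym : symmetric (@Frel l t).
Proof.
move=> x y; rewrite /Frel eq_sym.
case: (y =P x) => [//|/eqP nyx] /=.
have hx0 := ltn_ord x; have hy0 := ltn_ord y.
have nv : (x : nat) != y by rewrite eq_sym.
case hx: (x < l.*2.-1)%N; case hy: (y < l.*2.-1)%N => /=.
- by rewrite andbC.
- have ey : (y == l.*2.-1 :> nat) by move: hy hy0 hl; lia.
  have ex : (x == l.*2.-1 :> nat) = false by move: hx hl; lia.
  by rewrite ey ex.
- have ex : (x == l.*2.-1 :> nat) by move: hx hx0 hl; lia.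
  have ey : (y == l.*2.-1 :> nat) = false by move: hy hl; lia.
  by rewrite ey ex.
- by move: hx hy hx0 hy0 nv hl; lia.
Qed.

Lemma FrelLow (x y : T') : (x < l.*2.-1)%N -> (y < l.*2.-1)%N ->
  Fr x y = [&& (x : nat) != y, (x <= y + (l - 1))%N & (y <= x + (l - 1))%N].
Proof. by move=> hx hy; rewrite /Frel hx hy. Qed.

Lemma Frel_w (y : T') : Fr w y = (w != y) && (y < t)%N.
Proof. by rewrite /Frel hw ltnn /= eqxx. Qed.

Lemma Frel_io (x y : T) : Fr (io x) (io y) = Arel x y.
Proof. by rewrite FrelLow //= ltn_ord. Qed.

Lemma io_inj : injective io.
Proof. by move=> x y /(congr1 val) /= h; apply: val_inj. Qed.

Lemma io_ro (y : T') : y != w -> io (ro y) = y.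
Proof.
move=> hy; apply: val_inj => /=; rewrite /ro val_insubd.
have h2 : val y != l.*2.-1 by rewrite -hw.
have h1 : (val y < l.*2)%N := ltn_ord y.
by case: ifP => //; lia.
Qed.

Lemma ro_io (x : T) : ro (io x) = x.
Proof. by apply: val_inj; rewrite /= /ro val_insubd /= ltn_ord. Qed.

Lemma io_nw (x : T) : io x != w.
Proof. by rewrite -val_eqE /= hw neq_ltn ltn_ord. Qed.

Definition SA := [set Qc eF f | f in [set f : {ffun 'I_n -> T} | emb eF (@Arel l) f & v \in f @: setT]].
Definition SF := [set Qc eF f | f in [set f : {ffun 'I_n -> T'} | emb eF (@Frel l t) f & v' \in f @: setT]].
Definition SF0 := [set Qc eF f | f in [set f : {ffun 'I_n -> T'} | emb eF (@Frel l t) f & (v' \in f @: setT) && (w \notin f @: setT)]].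
Definition SF1 := [set Qc eF f | f in [set f : {ffun 'I_n -> T'} | emb eF (@Frel l t) f & (v' \in f @: setT) && (w \in f @: setT)]].

Lemma io_v : io v = v'.
Proof. by apply: val_inj; rewrite /= hv hv'. Qed.

Lemma SF0E : SF0 = Hm io @: SA.
Proof.
apply/setP=> p; apply/imsetP/imsetP.
- case=> g; rewrite inE => /andP [/embP [gi ge] /andP [gv gw]] ->.
  have gnw x : g x != w by apply/negP=> /eqP e; move: gw; rewrite -e imset_f.
  exists (Qc eF [ffun x => ro (g x)]).
    apply/imsetP; exists [ffun x => ro (g x)] => //; rewrite inE; apply/andP; split.
      apply/embP; split.
        move=> x y; rewrite !ffunE => /(congr1 io); rewrite !io_ro //; exact: gi.
      by move=> x y hxy; rewrite !ffunE -Frel_io !io_ro // ge.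
    case/imsetP: gv => x _ ex; apply/imsetP; exists x => //.
    by rewrite ffunE -ex -io_v ro_io.
  rewrite -QcH; congr Qc; apply/ffunP=> x; rewrite !ffunE io_ro //.
- case=> q; case/imsetP=> f; rewrite inE => /andP [/embP [fi fe] fv] -> ->.
  exists [ffun x => io (f x)]; last by rewrite QcH.
  rewrite inE; apply/and3P; split.
  + apply/embP; split.
      by move=> x y; rewrite !ffunE => /io_inj /fi.
    by move=> x y hxy; rewrite !ffunE Frel_io fe.
  + by case/imsetP: fv => x _ ex; apply/imsetP; exists x; rewrite ?ffunE -?ex ?io_v.
  + by apply/negP=> /imsetP [x _]; rewrite ffunE => /eqP; rewrite eq_sym (negbTE (io_nw _)).
Qed.

Lemma cardSF : #|SF| = #|SA| + #|SF1|.
Proof.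
have -> : SF = SF0 :|: SF1.
  apply/setP=> p; rewrite inE; apply/imsetP/orP.
    case=> f; rewrite inE => /andP [fe fv] ->.
    case: (boolP (w \in f @: setT)) => hw'.
      by right; apply/imsetP; exists f; rewrite // inE fe fv hw'.
    by left; apply/imsetP; exists f; rewrite // inE fe fv hw'.
  by case=> /imsetP [f]; rewrite inE => /andP [fe /andP [fv _]] ->; exists f; rewrite // inE fe fv.
rewrite cardsU_disj.
  by rewrite SF0E card_imset //; apply: Hm_inj io_inj.
apply: disjP => p /imsetP [f]; rewrite inE => /andP [_ /andP [_ nw]] ->.
by case/imsetP=> g; rewrite inE => /andP [_ /andP [_ gw]] [e _]; move: nw; rewrite e gw.
Qed.


Section Pos.
Variable x0 : 'I_n.
Hypotheses (hdeg : #|[set y | eF x0 y]| = t) (htn : (t + 2 <= n)%N) (hnl : (n < l)%N).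

Definition N0 := [set y | eF x0 y].
Definition R0 := [set y | (y != x0) && ~~ eF x0 y].
Definition gv (y : 'I_n) : nat :=
  if y == x0 then l.*2.-1 else if eF x0 y then rk N0 y else l - 1 - rk R0 y.
Definition f0 : {ffun 'I_n -> T'} := [ffun y => insubd w (gv y)].

Lemma cardR0 : #|R0| = n - 1 - t.
Proof.
have -> : R0 = ~: (x0 |: N0).
  by apply/setP=> y; rewrite !inE negb_or.
have := cardsC (x0 |: N0); rewrite cardsU1 card_ord /N0 inE iF /= hdeg; lia.
Qed.

Lemma gv_lt y : (gv y < l.*2)%N.
Proof.
rewrite /gv; case: ifP => _; first lia.
case: ifP => h.
  have := @rk_lt _ N0 y; rewrite /N0 inE h hdeg => /(_ isT); lia.
lia.
Qed.

Lemma vf0 y : val (f0 y) = gv y.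
Proof. by rewrite ffunE val_insubd gv_lt. Qed.

Lemma rN y : eF x0 y -> (rk N0 y < t)%N.
Proof. by move=> h; rewrite -hdeg; apply: rk_lt; rewrite inE. Qed.

Lemma rR y : y != x0 -> ~~ eF x0 y -> (rk R0 y < n - 1 - t)%N.
Proof. by move=> h1 h2; rewrite -cardR0; apply: rk_lt; rewrite inE h1 h2. Qed.

Lemma f0_inj : injective f0.
Proof.
move=> x y /(congr1 val); rewrite !vf0 /gv.
case: (x =P x0) => [->|/eqP nx]; case: (y =P x0) => [->|/eqP ny] //.
- case: ifP => h; [have := rN h | have := rR ny (negbT h)]; lia.
- case: ifP => h; [have := rN h | have := rR nx (negbT h)]; lia.
- case hx: (eF x0 x); case hy: (eF x0 y).
  + by move=> h; apply: (@rk_inj _ N0 x y) => //; rewrite inE.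
  + have := rN hx; have := rR ny (negbT hy); lia.
  + have := rN hy; have := rR nx (negbT hx); lia.
  + have := rR ny (negbT hy); have := rR nx (negbT hx) => h1 h2 h3.
    have h : rk R0 x = rk R0 y by lia.
    by apply: rk_inj h; rewrite inE ?nx ?ny ?hx ?hy.
Qed.

Lemma gv_small y : y != x0 -> (gv y <= l - 1)%N.
Proof. by move=> ny; rewrite /gv (negbTE ny); case: ifP => h; [have := rN h|]; lia. Qed.

Lemma f0_emb : emb eF (@Frel l t) f0.
Proof.
apply/embP; split; first exact: f0_inj.
have fw : f0 x0 = w by apply: val_inj; rewrite vf0 /gv eqxx -hw.
have key y : eF x0 y -> Fr (f0 x0) (f0 y).
  move=> h; rewrite fw Frel_w -val_eqE /= vf0 /gv.
  have ny : y != x0 by apply/negP=> /eqP e; move: h; rewrite e iF.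
  rewrite (negbTE ny) h; have := rN h; lia.
move=> x y hxy.
case: (x =P x0) => [ex|/eqP nx].
  by rewrite ex; apply: key; rewrite -ex.
case: (y =P x0) => [ey|/eqP ny].
  by rewrite Frel_sym ey; apply: key; rewrite -ey sF.
have nxy : x != y by apply/negP=> /eqP e; move: hxy; rewrite e iF.
have hx := gv_small nx; have hy := gv_small ny.
have hne : gv x != gv y.
  by apply/negP=> /eqP e; move/negP: nxy; apply; apply/eqP/f0_inj/val_inj; rewrite !vf0.
rewrite FrelLow ?vf0; lia.
Qed.

Lemma SF1_pos : (0 < #|SF1|)%N.
Proof.
have [r0 hr0] : exists r0, r0 \in R0 by apply/card_gt0P; rewrite cardR0; lia.
case: (arg_minnP (fun r : 'I_n => (r : nat)) hr0) => r hr hmin.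
have rk0 : rk R0 r = 0.
  apply/eqP; rewrite cards_eq0; apply/eqP/setP=> z; rewrite !inE.
  apply/negbTE/negP=> /andP [hz hzr]; have hz2 : z \in R0 by rewrite inE. have := hmin z hz2; lia.
apply/card_gt0P; exists (Qc eF f0); apply/imsetP; exists f0 => //.
rewrite inE f0_emb /=; apply/andP; split; apply/imsetP.
  exists r => //; apply: val_inj; rewrite vf0 /gv; have hr2 : r \in R0 := hr; move: hr2; rewrite inE => /andP [nr nf].
  by rewrite (negbTE nr) (negbTE nf) rk0 subn0; exact: hv'.
by exists x0 => //; apply: val_inj; rewrite vf0 /gv eqxx -hw.
Qed.


End Pos.


Section Ub.
Hypotheses (hmin : is_min_degree eF t) (hdiam : diameter2 eF)
  (ht1 : (1 <= t)%N) (htn : (t + 2 <= n)%N) (hnl : (n < l)%N).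

Definition Lp := [set z : T' | (z < t)%N].
Definition Big := w |: [set z : T' | (z < t + l - 1)%N].
Definition Dp := w |: (v' |: Lp).
Definition Cp := Big :\: Dp.
Definition Drp := [set U : {set T'} | (U \subset Cp) && (#|U| == n - t - 2)].

Lemma Dp_Big : Dp \subset Big.
Proof.
apply/subsetP=> z; rewrite !inE => /or3P [->//|/eqP ->|h]; apply/orP; right.
  by rewrite hv'; lia.
lia.
Qed.

Lemma cardLp : #|Lp| = t.
Proof. by rewrite card_prefix //; lia. Qed.

Lemma cardDp : #|Dp| = t + 2.
Proof.
rewrite !cardsU1 cardLp !inE negb_or -!val_eqE /= hw hv'.
have -> : (l.*2.-1 != l - 1) = true by lia.
have -> : (l.*2.-1 < t)%N = false by lia.
have -> : (l - 1 < t)%N = false by lia.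
by rewrite /=; lia.
Qed.

Lemma cardCp : #|Cp| = l - 2.
Proof.
rewrite /Cp cardsDS ?Dp_Big // cardDp /Big cardsU1 card_prefix; last by lia.
rewrite inE hw; have -> : (l.*2.-1 < t + l - 1)%N = false by lia.
by rewrite /=; lia.
Qed.

Lemma emb_sub (f : {ffun 'I_n -> T'}) : emb eF (@Frel l t) f ->
  v' \in f @: setT -> w \in f @: setT ->
  f \in \bigcup_(U in Drp) [set g in ffun_on (mem (Dp :|: U)) | injectiveb g].
Proof.
move=> /embP [fi fe] fv /imsetP [x _ ex].
set img := f @: setT.
have cimg : #|img| = n by rewrite card_imset // cardsT card_ord.
pose Nx := [set y | eF x y].
have hNx : f @: Nx \subset Lp.
  apply/subsetP=> z /imsetP [y]; rewrite inE => hy ->.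
  by have := fe _ _ hy; rewrite -ex Frel_w inE => /andP [].
have hL : Lp \subset img.
  have e : f @: Nx = Lp.
    apply/eqP; rewrite eqEcard hNx card_imset // cardLp.
    by case: hmin => _ /(_ x).
  by rewrite -e; apply: imsetS; apply: subsetT.
have hD : Dp \subset img.
  apply/subsetP=> z; rewrite !inE => /or3P [/eqP ->|/eqP ->|hz] //.
    by rewrite ex imset_f.
  by apply: (subsetP hL); rewrite inE.
have tl : (t < l.*2.-1)%N by lia.
have hB : img \subset Big.
  apply/subsetP=> z /imsetP [y _ ->].
  case: (y =P x) => [->|/eqP nyx]; first by rewrite -ex setU11.
  have fyw : f y != w by rewrite ex; apply/negP=> /eqP /fi /eqP; rewrite (negbTE nyx).
  have fyl : (f y < l.*2.-1)%N.
    have := ltn_ord (f y); have : (f y : nat) != w by []. rewrite hw; lia.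
  case: (boolP (eF x y)) => hxy.
    have : f y \in Lp by apply: (subsetP hNx); apply: imset_f; rewrite inE.
    by rewrite !inE => h; apply/orP; right; lia.
  case: hdiam => _ /(_ x y) []; first by rewrite eq_sym.
    exact: hxy.
  move=> u /andP [hxu huy].
  have fu : f u \in Lp by apply: (subsetP hNx); apply: imset_f; rewrite inE.
  move: fu; rewrite inE => fu.
  have := fe _ _ huy; rewrite FrelLow ?fyl ?(ltn_trans fu tl) //.
  have ar : forall p q : nat, (p < t)%N -> (q <= p + (l - 1))%N -> (q < t + l - 1)%N by move=> *; lia.
  by move=> /and3P [_ _ h]; rewrite !inE; apply/orP; right; apply: ar fu h.
apply/bigcupP; exists (img :\: Dp).
  rewrite inE; apply/andP; split; first by apply: setSD.
  by rewrite cardsDS // cimg cardDp; apply/eqP; lia.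
rewrite inE; apply/andP; split; last exact/injectiveP.
apply/ffun_onP=> y; rewrite -{1}(setIidPr hD) setID.
by change (f y \in img); apply: imset_f.
Qed.

Lemma SF1_ub : (#|SF1| <= n`! * 'C(l - 2, n - t - 2))%N.
Proof.
apply: leq_trans (leq_imset_card _ _) _.
apply: leq_trans (subset_leq_card (_ : _ \subset \bigcup_(U in Drp) [set g in ffun_on (mem (Dp :|: U)) | injectiveb g])) _.
  apply/subsetP=> f; rewrite inE => /andP [fe /andP [fv fw]]; exact: emb_sub.
apply: leq_trans (card_bigcup_le _ _) _.
rewrite (eq_bigr (fun _ => n`!)).
  rewrite sum_nat_const mulnC /Drp cards_draws cardCp; exact: leqnn.
move=> U; rewrite inE => /andP [hU /eqP cU].
rewrite card_inj_ffuns_on card_ord.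
have -> : #|mem (Dp :|: U)| = n.
  rewrite cardsU_disj ?cardDp ?cU; first lia.
  rewrite disjoint_sym; apply: disjP => z hz hd; move: (subsetP hU _ hz); rewrite inE hd.
  by [].
exact: ffactnn.
Qed.

End Ub.

End Part2.

Lemma CbE (m k : nat) : (k <= m)%N -> Cb (Posz m) (Posz k) = 'C(m, k).
Proof. by move=> hk; rewrite /Cb lez_nat hk. Qed.

Lemma sum_one m k (hk : (k < m)%N) (F : 'I_m -> nat) :
  (\sum_(v : 'I_m | val v == k) F v)%N = F (Ordinal hk).
Proof. by rewrite (big_pred1 (Ordinal hk)) // => v; rewrite /= -val_eqE. Qed.

Unset Implicit Arguments.
Theorem lemma10 (n : nat) (eF : rel 'I_n) (t l : nat) :
  symmetric eF -> irreflexive eF ->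
  diameter2 eF -> is_min_degree eF t ->
  (n < l)%N ->
  (n`! * Cb (l%:Z - 2) (n%:Z - t%:Z - 2) < Cb (l%:Z - 2) (n%:Z - 2))%N ->
  forall i : nat, (t + 1 <= i <= l - 1)%N ->
    ((0 < ddeg eF l t l)%R /\
     (ddeg eF l t l < (zdeg eF l i.+1)%:Z - (zdeg eF l i)%:Z)%R).
Proof.
move=> sF iF hdiam hmin hnl hC i hi.
have hdiam' := hdiam.
case: hdiam' => [[x [y [nxy nexy]]] hd2].
have [u hu] : exists u, eF x u && eF u y by apply: hd2.
case/andP: hu => hxu huy.
have n2 : (2 <= n)%N.
  have := ltn_ord x; have := ltn_ord y; have : (x : nat) != y by []. lia.
have htn : (t + 2 <= n)%N.
  case: hmin => _ /(_ x); rewrite /degree => hx.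
  have : [set z | eF x z] \subset ~: [set x; y].
    apply/subsetP=> z; rewrite !inE negb_or => hz.
    apply/andP; split; apply/negP=> /eqP e; move: hz; rewrite e ?iF //.
    by rewrite (negbTE nexy).
  move/subset_leq_card; have := cardsC [set x; y]; rewrite cards2 nxy card_ord.
  lia.
have ht1 : (1 <= t)%N.
  case: hmin => [[x0 hx0] _]; rewrite -hx0 /degree.
  pose y0 := if x0 == x then y else x.
  have ny0 : x0 != y0.
    by rewrite /y0; case: (x0 =P x) => [->|/eqP //]; rewrite nxy.
  case: (boolP (eF x0 y0)) => h.
    by apply/card_gt0P; exists y0; rewrite inE.
  have [z /andP [hz _]] : exists z, eF x0 z && eF z y0 by apply: hd2.
  by apply/card_gt0P; exists z; rewrite inE.
have hl : (0 < l)%N by lia.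
have hv : (l.-1 < l.*2.-1)%N by lia.
have hv' : (l.-1 < l.*2)%N by lia.
have hw : (l.*2.-1 < l.*2)%N by lia.
pose v := Ordinal hv; pose v' := Ordinal hv'; pose w := Ordinal hw.
have ev : (v : nat) = l - 1 by rewrite /= subn1.
have ev' : (v' : nat) = l - 1 by rewrite /= subn1.
have ew : (w : nat) = l.*2.-1 by [].
have ed : ddeg eF l t l = Posz #|SF1 eF t v' w|.
  rewrite /ddeg /fdeg /zdeg (sum_one hv) (sum_one hv').
  rewrite (FdegE sF (@Frel_sym l t hl v v' w ev ev' ew)) (FdegE sF (@Arel_sym l)).
  have := cardSF eF t hl ev ev' ew; rewrite /SF /SA => ->.
  by rewrite PoszD addrC addKr.
rewrite ed.
have pos := SF1_pos sF iF hl ev ev' ew.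
have hmin2 := hmin; case: hmin2 => [[x0 hx0] _].
have := pos t x0 hx0 htn hnl => {}pos.
have ub := SF1_ub hl ev ev' ew hmin hdiam ht1 htn hnl.
have e1 : (l%:Z - 2)%R = Posz (l - 2) by lia.
have e2 : (n%:Z - t%:Z - 2)%R = Posz (n - t - 2) by lia.
have e3 : (n%:Z - 2)%R = Posz (n - 2) by lia.
move: hC; rewrite e1 e2 e3 !CbE; try lia.
move=> hC.
have hi1 : (i < l.*2.-1)%N by lia.
have hi0 : (i.-1 < l.*2.-1)%N by lia.
have hb' : (i + l - 1 < l.*2.-1)%N by lia.
have p1 := @part1 n eF l sF iF x u hxu (Ordinal hi0) (Ordinal hi1) (Ordinal hb') i
  erefl erefl erefl (_ : (0 < i <= l - 1)%N).
rewrite /zdeg (sum_one hi1) (sum_one hi0).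
have := p1 ltac:(lia).
move: pos ub hC; lia.
Qed.
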